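(* Let $\varrho>1$ and $\widetilde{\sigma}_e^2>0$, and put $\check{x}=\widetilde{\sigma}_e^2/\varrho$, $\hat{x}=\varrho\,\widetilde{\sigma}_e^2$. Let $\sigma_e^2$ be a random variable with probability density $f_{\sigma_e^2}(x)=\frac{1}{2x\ln(\varrho)}$ for $x\in[\check{x},\hat{x}]$ (and $0$ otherwise). Let $P_0>0$, $\eta>0$, $\kappa\in(0,1)$, $\zeta\in(0,1]$, $\alpha>0$, let $d_{p_T}^e,d_{p_T}^b,d_b^e>0$ and $g_b^e\in\mathbb{C}$ be fixed, and set $$|h_{f_T}^b|^2=\eta\,(d_{p_T}^b)^{-2},\qquad |h_b^e|^2=\eta\,(d_b^e)^{-\alpha}|g_b^e|^2,$$ $$\Delta_1=P_0\,\eta\,(d_{p_T}^e)^{-2},\qquad \Delta_2=\Delta_1+\zeta\kappa P_0\,|h_{f_T}^b|^2|h_b^e|^2 .$$ For a threshold $\Gamma_{\text{th}}\in\mathbb{R}$ define the false-alarm probability $\mathcal{P}_f(\Gamma_{\text{th}})=\mathbb{P}(\Delta_1+\sigma_e^2\ge\Gamma_{\text{th}})$, the miss-detection probability $\mathcal{P}_m(\Gamma_{\text{th}})=\mathbb{P}(\Delta_2+\sigma_e^2\le\Gamma_{\text{th}})$, and the total detection error probability $\mathcal{P}_{\text{total}}(\Gamma_{\text{th}})=\mathcal{P}_f(\Gamma_{\text{th}})+\mathcal{P}_m(\Gamma_{\text{th}})$. Assume $\Delta_2-\Delta_1\le\hat{x}-\check{x}$. Then $\Gamma_{\text{th}}^*=\check{x}+\Delta_2$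 minimizes $\mathcal{P}_{\text{total}}$ over $\Gamma_{\text{th}}\in\mathbb{R}$, and the minimum value is $$\mathcal{P}_{\text{total}}^*=\frac{1}{2\ln(\varrho)}\ln\!\left(\frac{\hat{x}}{\check{x}+\zeta\kappa P_0\,|h_{f_T}^b|^2\,|h_b^e|^2}\right).$$
   Context: This models an eavesdropper performing energy detection: it compares its received power $\Delta_i+\sigma_e^2$ ($i=1$ under the hypothesis that the backscatter device is silent, $i=2$ when it transmits) with a threshold $\Gamma_{\text{th}}$. The noise power $\sigma_e^2$ is uncertain: in dB it is uniform on $[\widetilde{\sigma}^2_{e,\text{dB}}-\varrho_{\text{dB}},\widetilde{\sigma}^2_{e,\text{dB}}+\varrho_{\text{dB}}]$, which gives the stated density on $[\check{x},\hat{x}]$. Here $\zeta$ is the backscattering efficiency, $\kappa$ the reflected power fraction, $P_0$ the transmit power, $\eta$ the reference path loss, $d$'s are distances, $\alpha$ the path-loss exponent and $g_b^e$ the small-scale fading coefficient of the device-to-eavesdropper link. *)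

(* Defs.v *)
From HB Require Import structures.
From mathcomp Require Import all_boot all_order all_algebra.
From mathcomp Require Import all_classical all_reals all_analysis.
From mathcomp Require Import complex.
Set Implicit Arguments. Unset Strict Implicit. Unset Printing Implicit Defensive.
Import Order.TTheory GRing.Theory Num.Theory.
Local Open Scope ring_scope.

Definition noise_density (R : realType) (rho s : R) (x : R) : R :=
  if (s / rho <= x) && (x <= rho * s) then (2 * x * ln rho)^-1 else 0.

Definition hfb2 (R : realType) (eta dpb : R) : R := eta * dpb ^- 2.

Definition hbe2 (R : realType) (eta dbe alpha : R) (g : R[i]) : R :=
  eta * dbe `^ (- alpha) * (complex.Re g ^+ 2 + complex.Im g ^+ 2).

Definition Delta1 (R : realType) (P0 eta dpe : R) : R := P0 * eta * dpe ^- 2.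

Definition Delta2 (R : realType) (P0 eta dpe dpb dbe alpha zeta kappa : R)
  (g : R[i]) : R :=
  Delta1 P0 eta dpe + zeta * kappa * P0 * hfb2 eta dpb * hbe2 eta dbe alpha g.

(* Main.v *)
Require Import Defs.
From HB Require Import structures.
From mathcomp Require Import all_boot all_order all_algebra.
From mathcomp Require Import all_classical all_reals all_analysis.
From mathcomp Require Import complex.
From mathcomp Require Import ring lra.
Import Order.TTheory GRing.Theory Num.Theory.
Import numFieldNormedType.Exports.
Local Open Scope classical_set_scope.
Local Open Scope ring_scope.

Lemma int_inv (R : realType) (k a b : R) : 0 < a -> a <= b ->
  (\int[lebesgue_measure]_(x in `[a, b]) (k * x^-1)%:E = (k * ln b - k * ln a)%:E)%E.
Proof.
move=> a0; rewrite le_eqVlt => /orP[/eqP<-|ab].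
  by rewrite set_itv1 integral_set1 subrr.
have hd : forall x : R, 0 < x -> is_derive x 1 (fun y => k * ln y) (k * x^-1).
  move=> x x0.
  have := is_deriveZ k (is_derive1_ln x0).
  by rewrite /GRing.scale /=.
have hc : forall x : R, 0 < x -> {for x, continuous (fun y : R => k * ln y)}.
  move=> x x0; change {for x, continuous ((cst k) \* (@ln R))}.
  by apply: continuousM; [exact: cst_continuous | exact: continuous_ln].
rewrite (@continuous_FTC2 _ (fun x => k * x^-1) (fun y => k * ln y)) //.
- apply: continuous_in_subspaceT => x; rewrite inE /= in_itv /= => /andP[ax _].
  change {for x, continuous ((cst k) \* (@GRing.inv R))}.
  apply: continuousM; first exact: cst_continuous.
  apply: inv_continuous; rewrite gt_eqF //; exact: lt_le_trans ax.
- split.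
  + move=> x; rewrite in_itv /= => /andP[ax _].
    have := hd x (lt_trans a0 ax); by case.
  + apply: cvg_at_right_filter; exact: hc.
  + apply: cvg_at_left_filter; apply: hc; exact: lt_trans ab.
- move=> x; rewrite in_itv /= => /andP[ax _].
  rewrite derive1E; apply: derive_val; exact: hd (lt_trans a0 ax).
Qed.

Lemma xc_le_xh (R : realType) (rho s : R) : 1 < rho -> 0 < s -> s / rho <= rho * s.
Proof.
move=> hr hs; rewrite ler_pdivrMr; last lra.
have h : 0 <= rho * rho - 1 by nra.
have h2 : 0 <= s * (rho * rho - 1) by apply: mulr_ge0; lra.
lra.
Qed.

Lemma xc_gt0 (R : realType) (rho s : R) : 1 < rho -> 0 < s -> 0 < s / rho.
Proof. by move=> hr hs; apply: divr_gt0 => //; lra. Qed.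

Lemma dens_itv (R : realType) (rho s : R) (A : set R) (a b : R) :
  1 < rho -> 0 < s -> s / rho <= a -> a <= b -> b <= rho * s ->
  (forall x, A x -> s / rho <= x -> x <= rho * s -> a <= x <= b) ->
  (forall x, a <= x -> x <= b -> A x) ->
  (\int[lebesgue_measure]_(x in A) (noise_density rho s x)%:E =
    ((2 * ln rho)^-1 * ln b - (2 * ln rho)^-1 * ln a)%:E)%E.
Proof.
move=> hr hs ha hab hb h1 h2.
have xc0 := xc_gt0 _ _ _ hr hs.
rewrite -int_inv; last by []; last lra.
transitivity (\int[lebesgue_measure]_(x in `[a, b]) (noise_density rho s x)%:E)%E.
  rewrite integral_mkcond [RHS]integral_mkcond; apply: eq_integral => x _.
  rewrite !patchE.
  have eab : (x \in `[a, b]%classic) = (a <= x <= b) by rewrite mem_setE in_itv.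
  have eA : (x \in A) = `[< A x >] by apply/idP/asboolP; rewrite inE.
  rewrite eab eA.
  case: (asboolP (A x)) => xA; case: (boolP (a <= x <= b)) => xab //.
  - rewrite /noise_density; case: ifP => [/andP[u v]|_]; last by [].
    by move: xab; rewrite (h1 x xA u v).
  - by case: xA; move/andP: xab => [u v]; apply: h2.
apply: eq_integral => x; rewrite inE /= in_itv /= => /andP[u v].
rewrite /noise_density ifT; last by apply/andP; split; lra.
congr (_%:E).
have hl : 0 < ln rho by apply: ln_gt0.
have x0 : 0 < x by lra.
by field; apply/andP; split; apply: lt0r_neq0.
Qed.

Lemma dens_empty (R : realType) (rho s : R) (A : set R) :
  (forall x, A x -> s / rho <= x -> x <= rho * s -> False) ->
  (\int[lebesgue_measure]_(x in A) (noise_density rho s x)%:E = 0%:E)%E.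
Proof.
move=> h; apply: integral0_eq => x xA.
rewrite /noise_density; case: ifP => // /andP[u v].
by case: (h x xA u v).
Qed.

Definition clampr (R : realType) (lo hi y : R) :=
  if y < lo then lo else if hi < y then hi else y.
Arguments clampr {R}.

Lemma clamp_bounds (R : realType) (lo hi y : R) : lo <= hi ->
  lo <= clampr lo hi y <= hi.
Proof.
move=> h; rewrite /clampr; case: ifP => h1; first by rewrite lexx h.
case: ifP => h2; first by rewrite lexx h.
apply/andP; split; rewrite leNgt; [by rewrite h1 | by rewrite h2].
Qed.

Lemma clampP (R : realType) (lo hi y : R) : lo <= hi ->
  (y < lo /\ clampr lo hi y = lo) \/ (hi < y /\ clampr lo hi y = hi) \/
  ((lo <= y /\ y <= hi) /\ clampr lo hi y = y).
Proof.
move=> h; rewrite /clampr; case: ifP => h1; first by left.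
case: ifP => h2; first by right; left.
right; right; split => //; split; rewrite leNgt; [by rewrite h1 | by rewrite h2].
Qed.

Lemma clamp_ineq (R : realType) (lo hi u c : R) : 0 < lo -> lo <= hi -> 0 <= c ->
  clampr lo hi (u + c) * lo <= (lo + c) * clampr lo hi u.
Proof.
move=> h0 h1 hc.
case: (clampP _ lo hi u h1) => [[a1 ->]|[[a1 ->]|[[a1 a2] ->]]];
case: (clampP _ lo hi (u + c) h1) => [[b1 ->]|[[b1 ->]|[[b1 b2] ->]]]; nra.
Qed.

Ltac itv_solve := move=> x /=; rewrite ?in_itv /= ?andbT => *;
  try (apply/andP; split); lra.

Lemma L_val (R : realType) (rho s y : R) : 1 < rho -> 0 < s ->
  (\int[lebesgue_measure]_(x in [set` `]-oo, y]]) (noise_density rho s x)%:E =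
   ((2 * ln rho)^-1 * ln (clampr (s / rho) (rho * s) y) -
    (2 * ln rho)^-1 * ln (s / rho))%:E)%E.
Proof.
move=> hr hs; have h := xc_le_xh _ _ _ hr hs.
case: (clampP _ _ _ y h) => [[a1 ->]|[[a1 ->]|[[a1 a2] ->]]].
- rewrite subrr; apply: dens_empty; itv_solve.
- apply: dens_itv => //; itv_solve.
- apply: dens_itv => //; itv_solve.
Qed.

Lemma U_val (R : realType) (rho s y : R) : 1 < rho -> 0 < s ->
  (\int[lebesgue_measure]_(x in [set` `[y, +oo[]) (noise_density rho s x)%:E =
   ((2 * ln rho)^-1 * ln (rho * s) -
    (2 * ln rho)^-1 * ln (clampr (s / rho) (rho * s) y))%:E)%E.
Proof.
move=> hr hs; have h := xc_le_xh _ _ _ hr hs.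
case: (clampP _ _ _ y h) => [[a1 ->]|[[a1 ->]|[[a1 a2] ->]]].
- apply: dens_itv => //; itv_solve.
- rewrite subrr; apply: dens_empty; itv_solve.
- apply: dens_itv => //; itv_solve.
Qed.
Theorem lemma1 (R : realType) (d : measure_display) (T : measurableType d)
  (P : probability T R) (sigma2 : T -> R)
  (rho s P0 eta kappa zeta alpha dpe dpb dbe : R) (g : R[i]) :
  1 < rho -> 0 < s -> 0 < P0 -> 0 < eta -> 0 < kappa < 1 -> 0 < zeta <= 1 ->
  0 < alpha -> 0 < dpe -> 0 < dpb -> 0 < dbe ->
  measurable_fun setT sigma2 ->
  (forall A : set R, measurable A ->
     P (sigma2 @^-1` A) =
     (\int[lebesgue_measure]_(x in A) (noise_density rho s x)%:E)%E) ->
  let xc := s / rho in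
  let xh := rho * s in
  let D1 := Delta1 P0 eta dpe in
  let D2 := Delta2 P0 eta dpe dpb dbe alpha zeta kappa g in
  let Pf := fun G : R => P [set t | G <= D1 + sigma2 t] in
  let Pm := fun G : R => P [set t | D2 + sigma2 t <= G] in
  let Ptot := fun G : R => (Pf G + Pm G)%E in
  D2 - D1 <= xh - xc ->
  (forall G : R, (Ptot (xc + D2)%R <= Ptot G)%E) /\
  Ptot (xc + D2)%R =
    ((2 * ln rho)^-1 *
      ln (xh / (xc + zeta * kappa * P0 * hfb2 eta dpb * hbe2 eta dbe alpha g)))%:E.
Proof.
move=> hr hs hP0 heta /andP[hk0 hk1] /andP[hz0 hz1] ha hdpe hdpb hdbe msig hP
  xc xh D1 D2 Pf Pm Ptot hc.
set k := (2 * ln rho)^-1.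
set c := zeta * kappa * P0 * hfb2 eta dpb * hbe2 eta dbe alpha g.
have eD2 : D2 = D1 + c by [].
have hl : 0 < ln rho by apply: ln_gt0.
have hk : 0 < k by rewrite /k invr_gt0; lra.
have hxc : 0 < xc by apply: xc_gt0.
have hxch : xc <= xh by apply: xc_le_xh.
have hf : 0 < hfb2 eta dpb by rewrite /hfb2; apply: mulr_gt0 => //; rewrite invr_gt0 exprn_gt0.
have hb : 0 <= hbe2 eta dbe alpha g.
  rewrite /hbe2; apply: mulr_ge0; first by apply: mulr_ge0; [lra | exact: powR_ge0].
  by apply: addr_ge0; apply: sqr_ge0.
have c0 : 0 <= c.
  rewrite /c; apply: mulr_ge0 => //; apply: mulr_ge0; last lra.
  apply: mulr_ge0; last lra; apply: mulr_ge0; lra.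
have PfE : forall G, Pf G = (k * ln xh - k * ln (clampr xc xh (G - D1)))%:E.
  move=> G; rewrite /Pf.
  have -> : [set t | G <= D1 + sigma2 t] = sigma2 @^-1` [set` `[G - D1, +oo[].
    by apply/seteqP; split => t /=; rewrite in_itv /= andbT => ?; lra.
  by rewrite hP; [exact: U_val | exact: measurable_itv].
have PmE : forall G, Pm G = (k * ln (clampr xc xh (G - D2)) - k * ln xc)%:E.
  move=> G; rewrite /Pm.
  have -> : [set t | D2 + sigma2 t <= G] = sigma2 @^-1` [set` `]-oo, G - D2]].
    by apply/seteqP; split => t /=; rewrite in_itv /= => ?; lra.
  by rewrite hP; [exact: L_val | exact: measurable_itv].
have PtE : forall G, Ptot G = (k * (ln xh - ln (clampr xc xh (G - D2 + c))
    + ln (clampr xc xh (G - D2)) - ln xc))%:E.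
  move=> G; rewrite /Ptot PfE PmE -EFinD.
  have -> : G - D1 = G - D2 + c by rewrite eD2; ring.
  by congr (_%:E); ring.
have cl1 : clampr xc xh (xc + D2 - D2) = xc.
  by rewrite /clampr addrK ltxx ltNge hxch.
have cl2 : clampr xc xh (xc + D2 - D2 + c) = xc + c.
  rewrite addrK /clampr ifF; last by apply/negbTE; rewrite -leNgt; lra.
  by rewrite ifF //; apply/negbTE; rewrite -leNgt; lra.
split.
- move=> G; rewrite !PtE lee_fin cl1 cl2 ler_pM2l //.
  set u := G - D2.
  have hu := clamp_bounds _ xc xh u hxch.
  have huc := clamp_bounds _ xc xh (u + c) hxch.
  have hi := clamp_ineq _ xc xh u c hxc hxch c0.
  have : ln (clampr xc xh (u + c) * xc) <= ln ((xc + c) * clampr xc xh u).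
    by rewrite ler_ln // posrE; [apply: mulr_gt0 | apply: mulr_gt0]; lra.
  rewrite lnM ?posrE; last 2 first; try lra.
  rewrite lnM ?posrE; last 2 first; try lra.
- rewrite PtE cl1 cl2; congr (_%:E).
  rewrite ln_div ?posrE; [ring | | ]; lra.
Qed.
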